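(* Let $W$ be an sc-Banach space, $E=\mathbb R^n\oplus W$, $C=[0,\infty)^n\oplus W$, and identify $W$ with $\{0\}\oplus W$. Let $N$ be a finite-dimensional subspace of $E$ in good position to $C$, with good complement $N^\perp$, and let $\widetilde N$ be an algebraic complement of $N\cap W$ in $N$, so that $N=\widetilde N\oplus(N\cap W)$ and $E=\widetilde N\oplus(N\cap W)\oplus N^\perp$. Then $\widetilde N$ is in good position to $C$, and $\widetilde N^\perp=(N\cap W)\oplus N^\perp$ is a good complement of $\widetilde N$ in $E$.
   Context: An sc-Banach space is a Banach space $W$ with nested Banach spaces $W=W_0\supset W_1\supset\cdots$, compact inclusions $W_n\to W_m$ ($m<n$), $\bigcap W_m$ dense in each $W_m$; $E$ has levels $\mathbb R^n\oplus W_m$ and $\|\cdot\|$ is its level-$0$ norm. An sc-complement of a closed subspace $N$ is a closed subspace $N^\perp$ with $E_m=(N\cap E_m)\oplus(N^\perp\cap E_m)$ topologically for all $m$, both pieces sc-subspaces. A closed subspace $N$ is in good position to $C$ if $N\cap C$ has nonempty interior in $N$ and there exist an sc-complement $N^\perp$ and a constant $c>0$ such that for every $(n,m)\in N\oplus N^\perp$ with $\|m\|\le c\|n\|$: $n+m\in C$ iff $n\in C$; such an $N^\perp$ is called a good complement of $N$. *)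

(* Defs.v *)
From HB Require Import structures.
From mathcomp Require Import all_boot all_order all_algebra.
From mathcomp Require Import all_classical all_reals all_analysis.
Set Implicit Arguments. Unset Strict Implicit. Unset Printing Implicit Defensive.
Import Order.TTheory GRing.Theory Num.Theory.
Import numFieldNormedType.Exports.
Local Open Scope classical_set_scope.
Local Open Scope ring_scope.

Section Generic.
Context {R : realType} {V : lmodType R}.

Definition lin_subspace (S : set V) : Prop :=
  S 0 /\ forall (a : R) (x y : V), S x -> S y -> S (a *: x + y).

Definition findim_subspace (S : set V) : Prop :=
  exists (k : nat) (v : 'I_k -> V),
    S = [set x | exists a : 'I_k -> R, x = \sum_(i < k) a i *: v i].

Definition conv_in (p : V -> R) (u : nat -> V) (x : V) : Prop :=
  forall e : R, 0 < e -> exists N : nat, forall i, (N <= i)%N -> p (u i - x) < e.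

Definition cauchy_in (p : V -> R) (u : nat -> V) : Prop :=
  forall e : R, 0 < e -> exists N : nat, forall i j, (N <= i)%N -> (N <= j)%N ->
    p (u i - u j) < e.

Definition norm_on (S : set V) (p : V -> R) : Prop :=
  lin_subspace S /\
  (forall x, S x -> 0 <= p x) /\
  (forall x, S x -> p x = 0 -> x = 0) /\
  (forall (a : R) x, S x -> p (a *: x) = `|a| * p x) /\
  (forall x y, S x -> S y -> p (x + y) <= p x + p y).

Definition banach_on (S : set V) (p : V -> R) : Prop :=
  norm_on S p /\
  forall u : nat -> V, (forall i, S (u i)) -> cauchy_in p u ->
    exists x, S x /\ conv_in p u x.

End Generic.

Section SC.
Context {R : realType} {W : normedModType R}.

Definition sc_structure (lev : nat -> set W) (nrm : nat -> W -> R) : Prop :=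
  lev 0%N = setT /\ (forall x, nrm 0%N x = `|x|) /\
  (forall m, banach_on (lev m) (nrm m)) /\
  (* nested, with compact (in particular continuous) inclusions W_k -> W_m, m < k *)
  (forall m k, (m < k)%N ->
     lev k `<=` lev m /\
     (exists K : R, forall x, lev k x -> nrm m x <= K * nrm k x) /\
     (forall u : nat -> W, (forall i, lev k (u i)) ->
        (exists B : R, forall i, nrm k (u i) <= B) ->
        exists (phi : nat -> nat) (x : W),
          (forall i, (phi i < phi i.+1)%N) /\ lev m x /\ conv_in (nrm m) (u \o phi) x)) /\
  (* W_oo = \bigcap_m W_m is dense in each W_m *)
  (forall m x, lev m x -> forall e : R, 0 < e ->
     exists y, (forall k, lev k y) /\ nrm m (x - y) < e).

Definition Espace (n : nat) := ('rV[R]_n * W)%type.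

Variables (n : nat) (lev : nat -> set W) (nrm : nat -> W -> R).

Definition Elev (m : nat) : set (Espace n) := [set x | lev m x.2].

Definition Enrm (m : nat) (x : Espace n) : R := Num.max `|x.1| (nrm m x.2).

Definition Cquad : set (Espace n) := [set x | forall i : 'I_n, 0 <= (x.1 : 'rV[R]_n) ord0 i].

Definition Wsub : set (Espace n) := [set x | x.1 = 0].

Definition sc_subspace (F : set (Espace n)) : Prop :=
  lin_subspace F /\
  (forall m (u : nat -> Espace n) x, (forall i, F (u i) /\ Elev m (u i)) ->
     Elev m x -> conv_in (Enrm m) u x -> F x) /\
  (forall m x, F x -> Elev m x -> forall e : R, 0 < e ->
     exists y, F y /\ (forall k, Elev k y) /\ Enrm m (x - y) < e).

(* Np is an sc-complement of N: E_m = (N \cap E_m) (+) (Np \cap E_m)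
   topologically for all m, both pieces sc-subspaces *)
Definition sc_complement (N Np : set (Espace n)) : Prop :=
  sc_subspace N /\ sc_subspace Np /\
  (forall x, N x -> Np x -> x = 0) /\
  (forall m,
     (forall x, Elev m x -> exists a b, N a /\ Elev m a /\ Np b /\ Elev m b /\ x = a + b) /\
     (exists K : R, forall a b, N a -> Np b -> Elev m a -> Elev m b ->
        Enrm m a <= K * Enrm m (a + b))).

Definition nonempty_interior_in (N : set (Espace n)) : Prop :=
  exists x, N x /\ Cquad x /\
    exists r : R, 0 < r /\ forall y, N y -> Enrm 0 (y - x) < r -> Cquad y.

Definition good_complement (N Np : set (Espace n)) : Prop :=
  sc_complement N Np /\
  exists c : R, 0 < c /\
    forall a b, N a -> Np b -> Enrm 0 b <= c * Enrm 0 a ->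
      (Cquad (a + b) <-> Cquad a).

Definition good_position (N : set (Espace n)) : Prop :=
  nonempty_interior_in N /\ exists Np, good_complement N Np.

Definition alg_complement (Nt M N : set (Espace n)) : Prop :=
  lin_subspace Nt /\ Nt `<=` N /\
  (forall x, Nt x -> M x -> x = 0) /\
  (forall x, N x -> exists a b, Nt a /\ M b /\ x = a + b).

End SC.

Definition set_sum {R : realType} {V : lmodType R} (A B : set V) : set V :=
  [set x | exists a b, A a /\ B b /\ x = a + b].

(* Main.v *)
Require Import Defs.
From HB Require Import structures.
From mathcomp Require Import all_boot all_order all_algebra.
From mathcomp Require Import all_classical all_reals all_analysis.
From mathcomp Require Import ring lra.
Import Order.TTheory GRing.Theory Num.Theory.
Import numFieldNormedType.Exports.
Local Open Scope classical_set_scope.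
Local Open Scope ring_scope.

Section RV.
Variable (R : realType).

Lemma entry_le d (c : 'rV[R]_d) i : `|c 0 i| <= `|c|.
Proof. have -> : `|c| = mx_norm c by []. rewrite mx_normrE. apply/bigmax_geP; right; by exists (0, i). Qed.

Lemma mxnorm_le d (c : 'rV[R]_d) (b : R) : 0 <= b -> (forall j, `|c 0 j| <= b) -> `|c| <= b.
Proof. move=> b0 H. have -> : `|c| = mx_norm c by []. rewrite mx_normrE. apply: bigmax_le => //= -[a j] _. by rewrite [a]ord1. Qed.

Lemma lipc d (f : 'rV[R]_d -> R) (L : R) : 0 < L -> (forall x y, `|f x - f y| <= L * `|x - y|) -> continuous f.
Proof.
move=> L0 Lf x; apply/(@cvgrPdist_lt _ _ _ (nbhs x) (nbhs_filter x)) => e e0.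
near=> y.
apply: (le_lt_trans (Lf x y)).
rewrite -ltr_pdivlMl //.
near: y.
have H := (@cvgr_dist_lt _ _ _ (nbhs x) (nbhs_filter x) id x cvg_id _ (divr_gt0 e0 L0)). rewrite mulrC; exact: H.
Unshelve. all: by end_near.
Qed.

Lemma mulmx_bound d k (x : 'rV[R]_d) (P : 'M[R]_(d, k)) :
  `|x *m P| <= `|x| * \sum_j \sum_l `|P j l|.
Proof.
apply: mxnorm_le. by apply: mulr_ge0 => //; apply: sumr_ge0 => j _; apply: sumr_ge0.
move=> l; rewrite mxE.
apply: (le_trans (ler_norm_sum _ _ _)).
rewrite mulr_sumr; apply: ler_sum => j _.
rewrite normrM; apply: (@le_trans _ _ (`|x| * `|P j l|)).
  by apply: ler_wpM2r => //; exact: entry_le.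
apply: ler_wpM2l => //.
rewrite (bigD1 l) //= lerDl; apply: sumr_ge0 => *; exact: normr_ge0.
Qed.

End RV.

Section Gen.
Context {R : realType} {V : lmodType R}.
Implicit Types (S : set V) (p : V -> R).

Definition lc {d} (w : 'I_d -> V) (c : 'rV[R]_d) : V := \sum_i c 0 i *: w i.

Lemma lcD d (w : 'I_d -> V) c c' : lc w (c + c') = lc w c + lc w c'.
Proof. by rewrite /lc -big_split; apply: eq_bigr => i _; rewrite mxE scalerDl. Qed.
Lemma lcZ d (w : 'I_d -> V) a c : lc w (a *: c) = a *: lc w c.
Proof. by rewrite /lc scaler_sumr; apply: eq_bigr => i _; rewrite mxE scalerA. Qed.
Lemma lcN d (w : 'I_d -> V) c : lc w (- c) = - lc w c.
Proof. by rewrite -(scaleN1r c) lcZ scaleN1r. Qed.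
Lemma lcB d (w : 'I_d -> V) c c' : lc w (c - c') = lc w c - lc w c'.
Proof. by rewrite lcD lcN. Qed.
Lemma lc0 d (w : 'I_d -> V) : lc w 0 = 0.
Proof. by rewrite /lc big1 // => i _; rewrite mxE scale0r. Qed.

Lemma ls_add {S x y} : lin_subspace S -> S x -> S y -> S (x + y).
Proof. by move=> [S0 SS] Sx Sy; have := SS 1 x y Sx Sy; rewrite scale1r. Qed.
Lemma ls_scale {S a x} : lin_subspace S -> S x -> S (a *: x).
Proof. by move=> [S0 SS] Sx; have := SS a x 0 Sx S0; rewrite addr0. Qed.
Lemma ls_opp {S x} : lin_subspace S -> S x -> S (- x).
Proof. by move=> hS Sx; rewrite -scaleN1r; apply: ls_scale. Qed.
Lemma ls_sub {S x y} : lin_subspace S -> S x -> S y -> S (x - y).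
Proof. by move=> hS Sx Sy; apply: ls_add => //; apply: ls_opp. Qed.
Lemma ls_sum {S} {I : Type} {r : seq I} {P : pred I} {F : I -> V} :
  lin_subspace S -> (forall i, P i -> S (F i)) -> S (\sum_(i <- r | P i) F i).
Proof. move=> hS hF; apply: big_ind => //; [exact: hS.1 | move=> *; exact: ls_add]. Qed.
Lemma ls_lc {S d} {w : 'I_d -> V} {c} : lin_subspace S -> (forall i, S (w i)) -> S (lc w c).
Proof. move=> hS hw; apply: ls_sum => // i _; exact: ls_scale. Qed.

Lemma no_0 {S p} : norm_on S p -> p 0 = 0.
Proof. move=> [hS [_ [_ [hom _]]]]; have := hom 0 0 hS.1; by rewrite scale0r normr0 mul0r. Qed.
Lemma no_N {S p x} : norm_on S p -> S x -> p (- x) = p x.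
Proof. move=> [hS [_ [_ [hom _]]]] Sx; by rewrite -scaleN1r hom // normrN normr1 mul1r. Qed.
Lemma no_sym {S p x y} : norm_on S p -> S x -> S y -> p (x - y) = p (y - x).
Proof. move=> hp Sx Sy; rewrite -opprB (no_N hp) //; apply: ls_sub => //; exact: hp.1. Qed.
Lemma no_ge0 {S p x} : norm_on S p -> S x -> 0 <= p x.
Proof. by move=> [_ [h _]]; apply: h. Qed.
Lemma no_tri {S p x y} : norm_on S p -> S x -> S y -> p (x + y) <= p x + p y.
Proof. by move=> [_ [_ [_ [_ h]]]]; apply: h. Qed.
Lemma no_hom {S p a x} : norm_on S p -> S x -> p (a *: x) = `|a| * p x.
Proof. by move=> [_ [_ [_ [h _]]]]; apply: h. Qed.
Lemma no_def {S p x} : norm_on S p -> S x -> p x = 0 -> x = 0.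
Proof. by move=> [_ [_ [h _]]]; apply: h. Qed.
Lemma no_dist {S p x y} : norm_on S p -> S x -> S y -> `|p x - p y| <= p (x - y).
Proof.
move=> hp Sx Sy; have hS := hp.1.
rewrite ler_norml; apply/andP; split.
  rewrite lerNl opprB lerBlDr (no_sym hp) //.
  by have := no_tri hp (ls_sub hS Sy Sx) Sx; rewrite subrK.
rewrite lerBlDr.
by have := no_tri hp (ls_sub hS Sx Sy) Sy; rewrite subrK.
Qed.

Lemma no_lc {S p d} {w : 'I_d -> V} {c} : norm_on S p -> (forall i, S (w i)) ->
  p (lc w c) <= `|c| * \sum_i p (w i).
Proof.
move=> hp Sw; have hS := hp.1.
rewrite mulr_sumr.
pose K (y : V) (z : R) := S y /\ p y <= z.
suff : K (lc w c) (\sum_i `|c| * p (w i)) by case.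
rewrite /lc; apply: (big_ind2 K).
- by split; [exact: hS.1 | rewrite (no_0 hp)].
- move=> x1 x2 y1 y2 [S1 l1] [S2 l2]; split; first exact: ls_add.
  apply: (le_trans (no_tri hp S1 S2)); exact: lerD.
- move=> i _; split; first exact: ls_scale.
  rewrite (no_hom hp) //; apply: ler_wpM2r; [exact: (no_ge0 hp (Sw i)) | exact: entry_le].
Qed.

Definition indep {d} (w : 'I_d -> V) := forall c, lc w c = 0 -> c = 0.
Definition spanS {d} (w : 'I_d -> V) : set V := [set x | exists c, x = lc w c].

Lemma lower_bound {S p d} {w : 'I_d -> V} : norm_on S p -> (forall i, S (w i)) ->
  indep w -> exists K, 0 < K /\ forall c, `|c| <= K * p (lc w c).
Proof.
move=> hp Sw ind; have hS := hp.1.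
pose f := fun c : 'rV[R]_d => p (lc w c).
pose L := \sum_i p (w i) + 1.
have L0 : 0 < L by rewrite /L ltr_wpDl // sumr_ge0 // => i _; exact: (no_ge0 hp (Sw i)).
have fc : continuous f.
  apply: (@lipc R d f L L0) => x y; rewrite /f.
  apply: (le_trans (no_dist hp (ls_lc hS Sw) (ls_lc hS Sw))).
  rewrite -lcB mulrC; apply: (le_trans (no_lc (c:=x-y) hp Sw)).
  by apply: ler_wpM2l => //; rewrite /L lerDl.
pose A := [set c : 'rV[R]_d | `|c| = 1].
have cA : compact A.
  apply: bounded_closed_compact.
    exists 1; split => // M M1 c Ac; rewrite /A /= in Ac; rewrite /= Ac; exact: ltW.
  have -> : A = (fun c : 'rV[R]_d => `|c|) @^-1` [set 1] by [].
  apply: closed_comp => [x _|]; [exact: norm_continuous | exact: closed_eq].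
have nz c : c != 0 -> A (`|c|^-1 *: c).
  move=> cn0; rewrite /A /= normrZ normrV ?unitfE ?normr_eq0 // normr_id mulVf //.
  by rewrite normr_eq0.
have fge c : 0 <= f c by exact: (no_ge0 hp (ls_lc hS Sw)).
case: (pselect (A !=set0)) => [A0|A0]; last first.
  exists 1; split => // c; have [->|cn0] := eqVneq c 0; first by rewrite normr0 mul1r; apply: fge.
  by exfalso; apply: A0; exists (`|c|^-1 *: c); apply: nz.
have [c0 c0A minf] := compact_EVT_min A0 cA (continuous_subspaceT fc).
have mu0 : 0 < f c0.
  rewrite lt_def fge andbT; apply/eqP => /(no_def hp (ls_lc hS Sw)) /ind c00.
  by move: c0A; rewrite inE /A /= c00 normr0 => /eqP; rewrite eq_sym oner_eq0.
exists (f c0)^-1; split; first by rewrite invr_gt0.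
move=> c; have [->|cn0] := eqVneq c 0; first by rewrite normr0; apply: mulr_ge0; [rewrite invr_ge0; exact: ltW | exact: fge].
have := minf _ (mem_set (nz c cn0)); rewrite /f lcZ (no_hom hp (ls_lc hS Sw)).
rewrite normrV ?unitfE ?normr_eq0 // normr_id => h.
have cpos : 0 < `|c| by rewrite normr_gt0.
rewrite -ler_pdivrMl ?invr_gt0 // invrK.
rewrite -ler_pdivlMr // mulrC; exact: h.
Qed.

Definition fcons0 {d} (v : V) (w : 'I_d -> V) : 'I_d.+1 -> V :=
  fun j => oapp w v (unlift ord0 j).
Definition rcons0 {d} (a : R) (c : 'rV[R]_d) : 'rV[R]_d.+1 :=
  \row_j oapp (c 0) a (unlift ord0 j).
Definition rtail {d} (c : 'rV[R]_d.+1) : 'rV[R]_d := \row_i c 0 (lift ord0 i).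

Lemma lc_recl d (w : 'I_d.+1 -> V) c :
  lc w c = c 0 ord0 *: w ord0 + lc (fun i => w (lift ord0 i)) (rtail c).
Proof. by rewrite /lc big_ord_recl; congr (_ + _); apply: eq_bigr => i _; rewrite mxE. Qed.

Lemma lc_fcons d v (w : 'I_d -> V) c :
  lc (fcons0 v w) c = c 0 ord0 *: v + lc w (rtail c).
Proof.
rewrite lc_recl /fcons0 unlift_none /=; congr (_ + _).
by rewrite /lc; apply: eq_bigr => i _; rewrite liftK.
Qed.

Lemma rtail_rcons d a (c : 'rV[R]_d) : rtail (rcons0 a c) = c.
Proof. by apply/rowP => i; rewrite !mxE liftK. Qed.
Lemma rcons0_0 d a (c : 'rV[R]_d) : rcons0 a c 0 ord0 = a.
Proof. by rewrite mxE unlift_none. Qed.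

Lemma basis_ex {k} (u : 'I_k -> V) : exists d (w : 'I_d -> V), indep w /\ spanS w = spanS u.
Proof.
elim: k u => [|k IH] u.
  by exists 0%N, u; split => // c _; apply/rowP => -[].
pose u' := fun i => u (lift ord0 i).
have [d [w [iw sw]]] := IH u'.
have lcu c : lc u c = c 0 ord0 *: u ord0 + lc u' (rtail c) := @lc_recl k u c.
case: (pselect (spanS w (u ord0))) => [[c0 e0]|nin].
- exists d, w; split => //; apply/seteqP; split => x [c ->].
  + have : spanS u' (lc w c) by rewrite -sw; exists c.
    move=> [c' ->]; exists (rcons0 0 c').
    by rewrite lcu rcons0_0 scale0r add0r rtail_rcons.
  + have : spanS w (lc u' (rtail c)) by rewrite sw; exists (rtail c).
    move=> [c' e']; exists (c 0 ord0 *: c0 + c').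
    by rewrite lcu lcD lcZ -e0 -e'.
- exists d.+1, (fcons0 (u ord0) w); split.
  + move=> c; rewrite lc_fcons => h.
    have c00 : c 0 ord0 = 0.
      apply/eqP; apply/negPn/negP => nz; apply: nin.
      exists (- (c 0 ord0)^-1 *: rtail c).
      move/eqP: h; rewrite addr_eq0 => /eqP h.
      by rewrite lcZ scaleNr -scalerN -h scalerA mulVf // scale1r.
    move: h; rewrite c00 scale0r add0r => /iw ht.
    apply/rowP => j; rewrite [RHS]mxE.
    case: (unliftP ord0 j) => [i ->|->]; last by rewrite c00.
    by have := congr1 (fun m : 'rV[R]_d => m 0 i) ht; rewrite !mxE.
  + apply/seteqP; split => x [c ->].
    * rewrite lc_fcons.
      have : spanS u' (lc w (rtail c)) by rewrite -sw; exists (rtail c).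
      move=> [c' e']; exists (rcons0 (c 0 ord0) c').
      by rewrite lcu rcons0_0 rtail_rcons e'.
    * have : spanS w (lc u' (rtail c)) by rewrite sw; exists (rtail c).
      move=> [c' e']; exists (rcons0 (c 0 ord0) c').
      by rewrite lcu lc_fcons rcons0_0 rtail_rcons e'.
Qed.

End Gen.
Section Esp.
Context {R : realType} {W : normedModType R} {n : nat}.
Context {lev : nat -> set W} {nrm : nat -> W -> R}.
Local Notation E := (@Espace R W n).
Local Notation El := (@Elev R W n lev).
Local Notation En := (@Enrm R W n nrm).

Lemma Enorm_on {m} : banach_on (lev m) (nrm m) -> norm_on (El m) (En m).
Proof.
move=> [[hl [h0 [hd [hh ht]]]] _].
split; [split|split; [|split; [|split]]].
- exact: hl.1.
- move=> a x y; rewrite /Elev /= => hx hy; exact: hl.2.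
- by move=> x hx; rewrite /Enrm le_max normr_ge0.
- move=> [a b] hx; rewrite /Enrm /= => e.
  have : Num.max `|a| (nrm m b) <= 0 by rewrite e.
  rewrite ge_max => /andP [h1 h2].
  have a0 : a = 0 by apply/eqP; rewrite -normr_eq0 eq_le h1 normr_ge0.
  have b0 : b = 0 by apply: hd => //; apply/eqP; rewrite eq_le h2 h0.
  by rewrite a0 b0.
- move=> a x hx; rewrite /Enrm /= normrZ hh // maxr_pMr //.
- move=> x y hx hy; rewrite /Enrm /= ge_max; apply/andP; split.
    apply: (le_trans (ler_normD _ _)); apply: lerD; by rewrite le_max lexx.
  apply: (le_trans (ht _ _ hx hy)); apply: lerD; by rewrite le_max lexx orbT.
Qed.

Lemma En_fst m x : `|x.1| <= En m x.
Proof. by rewrite /Enrm le_max lexx. Qed.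

Lemma fst_lc d (w : 'I_d -> E) c : (lc w c).1 = c *m \matrix_i (w i).1.
Proof.
rewrite mulmx_sum_row /lc.
rewrite (@big_morph _ _ (fun x : E => x.1) 0 +%R 0 +%R (fun _ _ => erefl) erefl).
by apply: eq_bigr => i _; rewrite rowK.
Qed.

Lemma lc_delta d (w : 'I_d -> E) i : lc w (delta_mx 0 i) = w i.
Proof.
rewrite /lc (bigD1 i) //= mxE !eqxx /= scale1r big1 ?addr0 // => j ji.
by rewrite mxE eqxx (negbTE ji) /= scale0r.
Qed.

Lemma lc_sum d (w : 'I_d -> E) k (F : 'I_k -> 'rV[R]_d) :
  lc w (\sum_l F l) = \sum_l lc w (F l).
Proof. exact: (big_morph _ (@lcD R E d w) (@lc0 R E d w)). Qed.

Definition Einf (x : E) := forall k, El k x.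

Lemma Einf_lin : (forall m, banach_on (lev m) (nrm m)) -> lin_subspace Einf.
Proof.
move=> hb; split => [k|a x y hx hy k]; first exact: (Enorm_on (hb k)).1.1.
exact: (Enorm_on (hb k)).1.2.
Qed.

Lemma F1 {N : set E} : sc_structure lev nrm -> findim_subspace N ->
  sc_subspace lev nrm N -> forall x, N x -> Einf x.
Proof.
move=> [hl0 [hn0 [hb _]]] [k [v hN]] [hNl [_ hNd]].
have NS : N = spanS v.
  rewrite hN; apply/seteqP; split => x [a ->].
  - by exists (\row_i a i); rewrite /lc; apply: eq_bigr => i _; rewrite mxE.
  - by exists (fun i => a 0 i).
have [d [w [iw sw]]] := basis_ex v.
rewrite NS -sw.
have hE0 : norm_on (El 0) (En 0) := Enorm_on (hb 0%N).
have El0 x : El 0 x by rewrite /Elev hl0.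
have [K [K0 hK]] := lower_bound hE0 (fun i => El0 (w i)) iw.
have hI : lin_subspace Einf := Einf_lin hb.
have Nw : forall c, N (lc w c) by move=> c; rewrite NS -sw; exists c.
pose eps : R := ((d * d).+1%:R)^-1.
have eps0 : 0 < eps by rewrite invr_gt0 ltr0Sn.
have dens : forall i, exists t : 'rV[R]_d, Einf (lc w t) /\ `|t - delta_mx 0 i| < eps.
  move=> i.
  have Nwi : N (w i) by have := Nw (delta_mx 0 i); rewrite lc_delta.
  have [y [Ny [Iy hy]]] := hNd 0%N (w i) Nwi (El0 _) (eps / K) (divr_gt0 eps0 K0).
  have : spanS w y by rewrite sw -NS.
  move=> [t ey]; exists t; split; first by rewrite -ey.
  apply: (le_lt_trans (hK _)).
  rewrite lcB -ey lc_delta (no_sym hE0 (El0 _) (El0 _)).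
  by rewrite -ltr_pdivlMl // mulrC.
have [t ht] := choice dens.
pose G := \matrix_i t i.
have injG : forall c : 'rV[R]_d, c *m G = 0 -> c = 0.
  move=> c cG.
  have ec : c = c *m (1%:M - G) by rewrite mulmxBr mulmx1 cG subr0.
  pose b := \sum_j \sum_l `|(1%:M - G : 'M[R]_d) j l|.
  have hb1 : b < 1.
    apply: (@le_lt_trans _ _ (\sum_(j < d) \sum_(l < d) eps)).
      apply: ler_sum => j _; apply: ler_sum => l _.
      have -> : (1%:M - G : 'M[R]_d) j l = - ((t j - delta_mx 0 j) 0 l).
        by rewrite !mxE /= eq_sym opprB.
      rewrite normrN; apply: ltW; exact: (le_lt_trans (@entry_le R d _ l) (ht j).2).
    rewrite !sumr_const !card_ord -mulrnA -mulr_natl.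
    by rewrite ltr_pdivrMr ?ltr0Sn // mul1r ltr_nat ltnSn.
  have hc : `|c| <= `|c| * b by rewrite {1}ec; apply: mulmx_bound.
  apply/eqP; rewrite -normr_eq0 eq_le normr_ge0 andbT.
  rewrite leNgt; apply/negP => cp.
  have : `|c| * b < `|c| by rewrite -[X in _ < X]mulr1 ltr_pM2l.
  by rewrite ltNge hc.
have fG : row_free G.
  rewrite -kermx_eq0; apply/eqP/row_matrixP => i.
  rewrite row0; apply: injG; by rewrite -row_mul mulmx_ker row0.
move=> x [c ->].
have sG : (c <= G)%MS by apply: submx_full; exact: fG.
rewrite -(mulmxKpV sG) mulmx_sum_row lc_sum.
apply: (ls_sum hI) => l _.
rewrite lcZ rowK; apply: (ls_scale hI); exact: (ht l).1.
Qed.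

Lemma F2 {N Nt : set E} : (forall m, banach_on (lev m) (nrm m)) -> findim_subspace N ->
  (forall x, N x -> Einf x) -> alg_complement Nt (N `&` @Wsub R W n) N ->
  forall m, exists K2, 0 <= K2 /\ forall a, Nt a -> En m a <= K2 * `|a.1|.
Proof.
move=> hb [k [u hN]] NI [hNt [NtN [Nt0 Ndec]]] m.
have Nu i : N (u i).
  rewrite hN; exists (fun j => (j == i)%:R).
  rewrite (bigD1 i) //= eqxx scale1r big1 ?addr0 // => j ji.
  by rewrite (negbTE ji) scale0r.
have dec i : exists t : E, Nt t /\ t.1 = (u i).1.
  have [a [b [Nta [[_ Wb] e]]]] := Ndec _ (Nu i).
  by exists a; split => //; rewrite e /= Wb addr0.
have [t ht] := choice dec.
pose A := \matrix_i (u i).1.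
have At : \matrix_i (t i).1 = A by apply/matrixP => i j; rewrite !mxE (ht i).2.
pose P := pinvmx A.
have hEm : norm_on (El m) (En m) := Enorm_on (hb m).
have Elt i : El m (t i) := NI _ (NtN _ (ht i).1) m.
exists ((\sum_j \sum_l `|P j l|) * \sum_i En m (t i)); split.
  apply: mulr_ge0.
    by apply: sumr_ge0 => j _; apply: sumr_ge0 => l _; exact: normr_ge0.
  by apply: sumr_ge0 => i _; exact: (no_ge0 hEm (Elt i)).
move=> a Nta.
have Na := NtN _ Nta.
have : spanS u a.
  move: Na; rewrite hN => -[f ->]; exists (\row_i f i).
  by rewrite /lc; apply: eq_bigr => i _; rewrite mxE.
case=> c ec.
have a1 : a.1 = c *m A by rewrite ec fst_lc.
pose c' := a.1 *m P.
have hc' : c' *m A = a.1 by rewrite /c' mulmxKpV // a1 submxMl.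
have Ntb : Nt (lc t c') := ls_lc hNt (fun i => (ht i).1).
have eb : a = lc t c'.
  apply/eqP; rewrite -subr_eq0; apply/eqP.
  apply: Nt0; first exact: (ls_sub hNt Nta Ntb).
  split; first exact: (NtN _ (ls_sub hNt Nta Ntb)).
  by rewrite /Wsub /= fst_lc At hc' subrr.
rewrite {1}eb; apply: (le_trans (no_lc hEm Elt)).
rewrite mulrAC; apply: ler_wpM2r.
  by apply: sumr_ge0 => i _; exact: (no_ge0 hEm (Elt i)).
rewrite mulrC; exact: mulmx_bound.
Qed.

End Esp.

Lemma small_le0 {R : realType} (x K : R) : (forall e, 0 < e -> x <= K * e) -> x <= 0.
Proof.
move=> H; case: (ltrP 0 K) => K0.
  apply/ler_addgt0Pr => e e0; rewrite add0r.
  have := H (e / K) (divr_gt0 e0 K0).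
  by rewrite mulrCA divff ?gt_eqF // mulr1.
by have := H 1 ltr01; rewrite mulr1 => h; exact: le_trans h K0.
Qed.

Lemma Cq1 {R : realType} {W : normedModType R} {n : nat} (x y : @Espace R W n) :
  x.1 = y.1 -> Cquad x -> Cquad y.
Proof. by move=> e h i; rewrite -e; exact: h i. Qed.

Theorem lemma6p7 (R : realType) (W : normedModType R) (n : nat)
  (lev : nat -> set W) (nrm : nat -> W -> R)
  (N Nperp Nt : set (@Espace R W n)) :
  sc_structure lev nrm ->
  findim_subspace N ->
  nonempty_interior_in nrm N ->
  good_complement lev nrm N Nperp ->
  alg_complement Nt (N `&` @Wsub R W n) N ->
  good_position lev nrm Nt /\
  good_complement lev nrm Nt (set_sum (N `&` @Wsub R W n) Nperp).
Proof.
move=> hsc hfd hint [[hscN [hscNp [hNNp hlev]]] [c [c0 hgood]]] halg.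
have [hl0 [hn0 [hb _]]] := hsc.
have NI := F1 hsc hfd hscN.
have hF2 := F2 hb hfd NI halg.
case: halg => [hNt [NtN [Nt0 Ndec]]].
case: hscN => [hNl [hNc hNd]].
case: hscNp => [hPl [hPc hPd]].
set M := N `&` @Wsub R W n.
have hEn (m : nat) : norm_on (@Elev R W n lev m) (@Enrm R W n nrm m) := Enorm_on (hb m).
have El0 (x : Espace n) : @Elev R W n lev 0 x by rewrite /Elev hl0.
have hMl : lin_subspace M.
  split; first by split; [exact: hNl.1 | done].
  move=> a x y [Nx Wx] [Ny Wy]; split; first exact: hNl.2.
  by rewrite /Wsub /= Wx Wy scaler0 addr0.
have GC : good_complement lev nrm Nt (set_sum M Nperp).
  split.
  - split; [|split; [|split]].
    + split; [exact: hNt | split].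
      * move=> m u x hu Ex hconv.
        have Nx : N x := hNc m u x (fun i => conj (NtN _ (hu i).1) (hu i).2) Ex hconv.
        have [a [b [Nta [Mb ex]]]] := Ndec x Nx.
        have [K2 [K20 hK2]] := hF2 m.
        suff b0 : b = 0 by rewrite ex b0 addr0.
        have Ea : Elev lev m a := NI _ (NtN _ Nta) m.
        have Eb : Elev lev m b := NI _ Mb.1 m.
        have H0 : Enrm nrm m b = 0; last by have := no_def (hEn m) Eb H0.
        apply/eqP; rewrite eq_le (no_ge0 (hEn m) Eb) andbT.
        apply: (@small_le0 _ _ (1 + K2)) => e e0.
        have [i hi] := hconv e e0; have hi' := hi i (leqnn i).
        have eb : b = (x - u i) + (u i - a).
          by rewrite addrA subrK ex addrAC subrr add0r.
        rewrite eb.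
        apply: (le_trans (no_tri (hEn m) (ls_sub (hEn m).1 Ex (hu i).2)
                                          (ls_sub (hEn m).1 (hu i).2 Ea))).
        rewrite mulrDl mul1r; apply: lerD.
          by rewrite (no_sym (hEn m) Ex (hu i).2); exact: ltW.
        apply: (le_trans (hK2 _ (ls_sub hNt (hu i).1 Nta))).
        apply: (ler_wpM2l K20).
        have -> : (u i - a).1 = (u i - x).1 by rewrite ex /= Mb.2 addr0.
        exact: le_trans (En_fst m _) (ltW hi').
      * move=> m x Ntx Ex e e0; exists x; split => //; split.
          exact: NI _ (NtN _ Ntx).
        by rewrite subrr (no_0 (hEn m)).
    + split; [split|split].
      * by exists 0, 0; split; [exact: hMl.1|split; [exact: hPl.1|rewrite addr0]].
      * move=> a x y [s1 [p1 [Ms1 [Pp1 ->]]]] [s2 [p2 [Ms2 [Pp2 ->]]]].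
        exists (a *: s1 + s2), (a *: p1 + p2); split; first exact: hMl.2.
        split; first exact: hPl.2.
        by rewrite scalerDr addrACA.
      * move=> m u x hu Ex hconv.
        have [a [b [Na [Ea [Pb [Eb ex]]]]]] := (hlev m).1 x Ex.
        have [K hK] := (hlev m).2.
        exists a, b; split; last by split.
        split => //.
        apply/eqP; rewrite -normr_eq0 eq_le normr_ge0 andbT.
        apply: (@small_le0 _ _ `|K|) => e e0.
        have [i hi] := hconv e e0; have hi' := hi i (leqnn i).
        have [s [p [Ms [Pp eu]]]] := (hu i).1.
        have Es : Elev lev m s := NI _ Ms.1 m.
        have Ep : Elev lev m p.
          by have := ls_sub (hEn m).1 (hu i).2 Es; rewrite eu addrAC subrr add0r.
        have := hK (a - s) (b - p) (ls_sub hNl Na Ms.1) (ls_sub hPl Pb Pp)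
                   (ls_sub (hEn m).1 Ea Es) (ls_sub (hEn m).1 Eb Ep).
        have -> : a - s + (b - p) = x - u i by rewrite ex eu opprD addrACA.
        move=> h.
        have -> : a.1 = (a - s).1 by rewrite /= Ms.2 subr0.
        apply: (le_trans (En_fst m _)); apply: (le_trans h).
        apply: (le_trans (ler_norm _)).
        rewrite normrM (ger0_norm (no_ge0 (hEn m) (ls_sub (hEn m).1 Ex (hu i).2))).
        apply: ler_wpM2l => //.
        by rewrite (no_sym (hEn m) Ex (hu i).2); exact: ltW.
      * move=> m x [s [p [Ms [Pp ex]]]] Ex e e0.
        have Es : Elev lev m s := NI _ Ms.1 m.
        have Ep : Elev lev m p.
          by have := ls_sub (hEn m).1 Ex Es; rewrite ex addrAC subrr add0r.
        have [y [Py [Iy hy]]] := hPd m p Pp Ep e e0.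
        exists (s + y); split; first by exists s, y.
        split; first by move=> k; exact: (ls_add (hEn k).1 (NI _ Ms.1 k) (Iy k)).
        by rewrite ex opprD addrACA subrr add0r.
    + move=> x Ntx [s [p [Ms [Pp ex]]]].
      have Np : N p.
        by have := ls_sub hNl (NtN _ Ntx) Ms.1; rewrite ex addrAC subrr add0r.
      have p0 := hNNp p Np Pp.
      by apply: Nt0 Ntx _; rewrite ex p0 addr0.
    + move=> m; split.
      * move=> x Ex.
        have [a [b [Na [Ea [Pb [Eb ex]]]]]] := (hlev m).1 x Ex.
        have [t [s [Ntt [Ms ea]]]] := Ndec a Na.
        exists t, (s + b); split => //; split; first exact: NI _ (NtN _ Ntt) m.
        split; first by exists s, b.
        split; first exact: (ls_add (hEn m).1 (NI _ Ms.1 m) Eb).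
        by rewrite ex ea addrA.
      * have [K hK] := (hlev m).2; have [K2 [K20 hK2]] := hF2 m.
        exists (K2 * K) => a b Nta [s [p [Ms [Pp eb]]]] Ea Eb.
        have Es : Elev lev m s := NI _ Ms.1 m.
        have Ep : Elev lev m p.
          by have := ls_sub (hEn m).1 Eb Es; rewrite eb addrAC subrr add0r.
        have h := hK (a + s) p (ls_add hNl (NtN _ Nta) Ms.1) Pp (ls_add (hEn m).1 Ea Es) Ep.
        rewrite -addrA -eb in h.
        apply: (le_trans (hK2 a Nta)); rewrite -mulrA; apply: (ler_wpM2l K20).
        have -> : a.1 = (a + s).1 by rewrite /= Ms.2 addr0.
        exact: le_trans (En_fst m _) h.
  - have [K0 hK0] := (hlev 0%N).2; have [K2 [K20 hK2]] := hF2 0%N.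
    pose A := 1 + `|K0|; pose B := 1 + K2.
    have A0 : 0 < A by rewrite /A; have := normr_ge0 K0; lra.
    have B0 : 0 < B by rewrite /B; lra.
    have cAB : 0 < c / (A * B) by apply: divr_gt0 => //; apply: mulr_gt0.
    exists (c / (A * B)); split => //.
    move=> a b Nta [s [p [Ms [Pp eb]]]] hbb.
    have Na := NtN _ Nta; have Nas : N (a + s) := ls_add hNl Na Ms.1.
    have eq1 : (a + s).1 = a.1 by rewrite /= Ms.2 addr0.
    have hp : Enrm nrm 0 p <= c * Enrm nrm 0 (a + s).
      have h1 := hK0 s p Ms.1 Pp (El0 _) (El0 _).
      have h2 : Enrm nrm 0 p <= Enrm nrm 0 (s + p) + Enrm nrm 0 s.
        have := no_tri (hEn 0%N) (El0 (s + p)) (El0 (- s)).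
        by rewrite (no_N (hEn 0%N) (El0 s)) addrAC subrr add0r.
      have hX0 := no_ge0 (hEn 0%N) (El0 (s + p)).
      have hZ0 := no_ge0 (hEn 0%N) (El0 (a + s)).
      have s1 : Enrm nrm 0 s <= `|K0| * Enrm nrm 0 (s + p).
        apply: (le_trans h1); apply: ler_wpM2r => //; exact: ler_norm.
      have p1 : Enrm nrm 0 p <= A * Enrm nrm 0 (s + p).
        rewrite /A mulrDl mul1r; exact: le_trans h2 (lerD (lexx _) s1).
      have y1 : Enrm nrm 0 a <= B * Enrm nrm 0 (a + s).
        apply: (le_trans (hK2 a Nta)).
        have : `|a.1| <= Enrm nrm 0 (a + s) by rewrite -eq1; exact: En_fst.
        move=> h3; have := ler_wpM2l K20 h3; rewrite /B; move: hZ0; lra.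
      rewrite eb in hbb.
      apply: (le_trans p1).
      apply: (@le_trans _ _ (A * (c / (A * B) * (B * Enrm nrm 0 (a + s))))).
        apply: (ler_wpM2l (ltW A0)); apply: (le_trans hbb).
        apply: (ler_wpM2l (ltW cAB)); exact: y1.
      rewrite le_eqVlt; apply/orP; left; apply/eqP.
      field; apply/andP; split; apply: lt0r_neq0 => //.
    rewrite eb addrA.
    have := hgood (a + s) p Nas Pp hp => -[h4 h5].
    split => h.
      exact: Cq1 eq1 (h4 h).
    by apply: h5; exact: Cq1 (esym eq1) h.
split; last exact: GC.
split; last by exists (set_sum M Nperp).
case: hint => x0 [Nx0 [Cx0 [r [r0 hr]]]].
have [a [b [Nta [Mb ex]]]] := Ndec x0 Nx0.
have e1 : a.1 = x0.1 by rewrite ex /= Mb.2 addr0.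
exists a; split => //; split; first exact: Cq1 (esym e1) Cx0.
exists r; split => // y Nty hy.
have : Cquad (y + b).
  apply: hr; first exact: ls_add hNl (NtN _ Nty) Mb.1.
  by rewrite ex opprD addrACA subrr addr0.
by apply: Cq1; rewrite /= Mb.2 addr0.
Qed.
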